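(* Let $G$ be a $k$-regular graph such that $\overline{G}$ is Helly, and let $T$ be a cotriangle in $G$. Then there are at least $k$ vertices of $G$ that are adjacent to $T$.
   Context: All graphs are finite and simple. A clique is a maximal set of pairwise adjacent vertices. A collection of sets has the Helly property if every subcollection whose members pairwise intersect has nonempty total intersection. A graph is Helly if its collection of cliques has the Helly property. A cotriangle in $G$ is an independent set of three vertices of $G$. A vertex $x$ of $G$ is adjacent to a cotriangle $T$ if $x$ is adjacent in $G$ to at least two vertices of $T$. *)

(* Defs.v *)
From mathcomp Require Import all_boot.
Set Implicit Arguments. Unset Strict Implicit. Unset Printing Implicit Defensive.

Definition simple_graph (T : finType) (e : rel T) : Prop :=
  irreflexive e /\ symmetric e.

Definition compl_rel (T : finType) (e : rel T) : rel T :=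
  fun x y => (x != y) && ~~ e x y.

Definition nbhd (T : finType) (e : rel T) (x : T) : {set T} := [set y | e x y].
Definition regular (T : finType) (e : rel T) (k : nat) : Prop :=
  forall x : T, #|nbhd e x| = k.

Definition is_complete_set (T : finType) (e : rel T) (A : {set T}) : bool :=
  [forall x in A, forall y in A, (x != y) ==> e x y].
Definition is_clique (T : finType) (e : rel T) (A : {set T}) : bool :=
  maxset (is_complete_set e) A.

Definition helly (T : finType) (C : {set {set T}}) : Prop :=
  forall F : {set {set T}}, F \subset C ->
    (forall A B, A \in F -> B \in F -> A :&: B != set0) ->
    \bigcap_(A in F) A != set0.

Definition helly_graph (T : finType) (e : rel T) : Prop :=
  helly [set A : {set T} | is_clique e A].

Definition cotriangle (T : finType) (e : rel T) (S : {set T}) : Prop :=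
  #|S| = 3 /\ forall x y, x \in S -> y \in S -> ~~ e x y.

Definition adjacent_to (T : finType) (e : rel T) (S : {set T}) (x : T) : bool :=
  2 <= #|[set y in S | e x y]|.

(* Main.v *)
Require Import Defs.
From mathcomp Require Import all_boot.
From mathcomp Require Import zify.

Theorem mainTheorem4 (T : finType) (e : rel T) (k : nat) (S : {set T}) :
  simple_graph e -> regular e k -> helly_graph (compl_rel e) ->
  cotriangle e S ->
  k <= #|[set x : T | adjacent_to e S x]|.
Proof.
move=> [irr sym] reg hel [cS indS].
set F := [set K : {set T} | is_clique (compl_rel e) K && (1 < #|K :&: S|)].
have hF := hel F.
have sub : F \subset [set A : {set T} | is_clique (compl_rel e) A].
  by apply/subsetP => K; rewrite !inE => /andP[].
have inter : forall A B, A \in F -> B \in F -> A :&: B != set0.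
  move=> A B; rewrite !inE => /andP[_ hA] /andP[_ hB].
  apply/negP => /eqP AB0.
  have h1 : #|(A :&: S) :&: (B :&: S)| = 0.
    apply/eqP; rewrite cards_eq0; apply/eqP/setP => x.
    rewrite !inE; apply/negbTE; apply/negP => /andP[/andP[xA _] /andP[xB _]].
    by move: AB0 => /setP /(_ x); rewrite !inE xA xB.
  have h2 : #|(A :&: S) :|: (B :&: S)| <= #|S|.
    apply: subset_leq_card; apply/subsetP => x; rewrite !inE.
    by case/orP => /andP[].
  move: h2; rewrite cardsU h1 cS; lia.
have := hF sub inter.
case: (set_0Vmem (\bigcap_(A in F) A)) => [-> /eqP //|[u uI] _].
rewrite -(reg u); apply: subset_leq_card; apply/subsetP => y.
rewrite !inE => euy.
apply/negP => hy.
have cnt : 1 < #|[set z in S | ~~ e y z]|.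
  have := cardsID [set z in S | e y z] S.
  have -> : S :&: [set z in S | e y z] = [set z in S | e y z].
    by apply/setP => z; rewrite !inE andbA andbb.
  have -> : S :\: [set z in S | e y z] = [set z in S | ~~ e y z].
    by apply/setP => z; rewrite !inE; case: (z \in S); rewrite ?andbT ?andbF.
  move: hy; rewrite /adjacent_to cS; lia.
case/card_gt1P: cnt => y1 [y2 [] ]; rewrite !inE => /andP[y1S ey1] /andP[y2S ey2] y12.
have hcomp : is_complete_set (compl_rel e) [set y; y1; y2].
  apply/forallP => a; apply/implyP => ha; apply/forallP => b; apply/implyP => hb.
  apply/implyP => ab; rewrite /compl_rel ab /=.
  move: ha hb; rewrite !inE => ha hb.
  have hS : forall c d, c \in S -> d \in S -> ~~ e c d by [].
  case/orP: ha => [/orP[]|]/eqP->; case/orP: hb => [/orP[]|]/eqP->;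
    rewrite ?eqxx // in ab *;
    rewrite ?ey1 ?ey2 //; try (by apply: indS).
  all: rewrite ?irr //; try by rewrite (sym y1).
  by rewrite (sym y2).
have [K maxK subK] := maxset_exists hcomp.
have KF : K \in F.
  rewrite inE /is_clique maxK /=; apply/card_gt1P; exists y1, y2; split => //;
  rewrite inE (subsetP subK) ?inE ?eqxx ?orbT //.
have uK : u \in K by move/bigcapP: uI; apply.
have yK : y \in K by rewrite (subsetP subK) // !inE eqxx.
have := maxsetp maxK => /forallP /(_ u) /implyP /(_ uK) /forallP /(_ y) /implyP /(_ yK).
have uy : u != y by apply/eqP => uy; move: euy; rewrite uy irr.
by rewrite uy /compl_rel uy euy.
Qed.
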